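(* For every $n\ge1$ one has $\iota_1(\mathrm{Lie}(n))\subset\mathrm{Vert}(n)$ and $\iota_1(\mathrm{Lie}_1(n))\subset\mathrm{Vert}_1(n)$.
   Context: $\mathrm{Lie}$ is the operad of Lie algebras. $\mathrm{preLie}$ is the operad of (right) pre-Lie algebras, i.e. algebras with a product $\circ$ such that $(a\circ b)\circ c-a\circ(b\circ c)$ is graded symmetric in $b,c$; equivalently, $a\circ[b,c]=(a\circ b)\circ c-(-1)^{|b||c|}(a\circ c)\circ b$ with $[b,c]=b\circ c-(-1)^{|b||c|}c\circ b$. The inclusion of operads $\iota_1\colon\mathrm{Lie}\hookrightarrow\mathrm{preLie}$ sends $[x_1,x_2]$ to $x_1\circ x_2-x_2\circ x_1$. The operads $\mathrm{Lie}_1$ and $\mathrm{preLie}_1$ are the versions with bracket, resp. pre-Lie product, of degree one (obtained by desuspension of the underlying spaces), and $\iota_1\colon\mathrm{Lie}_1\hookrightarrow\mathrm{preLie}_1$ is the corresponding super-analogue. $\mathrm{Vert}(n)\subset\mathrm{preLie}(n)$ (resp. $\mathrm{Vert}_1(n)\subset\mathrm{preLie}_1(n)$) is the $n!$-dimensional subspace spanned by the left-normed products $(\cdots((x_{\sigma_1}\circ x_{\sigma_2})\circ x_{\sigma_3})\circ\cdots)\circ x_{\sigma_n}$ for $\sigma\in S_n$. *)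

(* Defs.v *)
From HB Require Import structures.
From mathcomp Require Import all_boot all_order all_algebra.
From mathcomp Require Import monalg.


Unset Strict Implicit.
Unset Printing Implicit Defensive.

Import GRing.Theory.
Local Open Scope ring_scope.

(* Nonassociative monomials in the generators x_0, x_1, x_2, ... :
   binary trees with leaves labelled by generator indices.              *)
Inductive tree : Type := Leaf of nat | Node of tree & tree.

Fixpoint tree_enc (t : tree) : GenTree.tree nat :=
  match t with
  | Leaf i => GenTree.Leaf i
  | Node l r => GenTree.Node 0 [:: tree_enc l; tree_enc r]
  end.

Fixpoint tree_dec (g : GenTree.tree nat) : option tree :=
  match g with
  | GenTree.Leaf i => Some (Leaf i)
  | GenTree.Node _ [:: a; b] =>
      match tree_dec a, tree_dec b with
      | Some l, Some r => Some (Node l r)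
      | _, _ => None
      end
  | _ => None
  end.

Lemma tree_encK : pcancel tree_enc tree_dec.
Proof. by elim=> [i|l IHl r IHr] //=; rewrite IHl IHr. Qed.

HB.instance Definition _ := Countable.copy tree (pcan_type tree_encK).

Fixpoint leaves (t : tree) : seq nat :=
  match t with Leaf i => [:: i] | Node l r => leaves l ++ leaves r end.

(* The free (nonassociative) algebra on the generators x_i over K,
   as the K-vector space with basis the monomials (trees);
   the product of basis monomials s, t is the monomial Node s t. *)
Definition FM (K : fieldType) := {malg K[tree]}.

(* Parity convention: all generators have parity p (p = false: the
   ungraded/even case, giving preLie and Lie; p = true: odd generators,
   giving the degree-one operads preLie_1 and Lie_1 via suspension).                *)
Definition par (p : bool) (t : tree) : bool := p && odd (size (leaves t)).

Inductive ctx : Type :=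
  | Hole
  | CL of ctx & tree
  | CR of tree & ctx.

Fixpoint plug (c : ctx) (t : tree) : tree :=
  match c with
  | Hole => t
  | CL c' u => Node (plug c' t) u
  | CR u c' => Node u (plug c' t)
  end.

(* These elements span the two-sided ideal
   of the free algebra generated by the pre-Lie relation.              *)
Definition prelie_rel (K : fieldType) (p : bool) (C : ctx) (a b c : tree)
  : FM K :=
  (<< plug C (Node (Node a b) c) >> - << plug C (Node a (Node b c)) >>)
  - (-1) ^+ (par p b && par p c) *:
    (<< plug C (Node (Node a c) b) >> - << plug C (Node a (Node c b)) >>).

Definition in_prelie_ideal_gen (K : fieldType) (p : bool) (x : FM K) : Prop :=
  exists C a b c, x = prelie_rel K p C a b c.

Definition inSpan (K : fieldType) (P : FM K -> Prop) (x : FM K) : Prop :=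
  exists l : seq (K * FM K),
    (forall q, q \in l -> P q.2) /\ x = \sum_(q <- l) q.1 *: q.2.

(* Expansion of a Lie bracket monomial (a binary tree read as nested
   graded commutators [u,v] = u o v - (-1)^{|u||v|} v o u) as a signed
   list of nonassociative monomials; a sign bit true means coefficient -1. *)
Fixpoint lie_terms (p : bool) (t : tree) : seq (bool * tree) :=
  match t with
  | Leaf i => [:: (false, Leaf i)]
  | Node l r =>
      let e := par p l && par p r in
      [seq (q1.1 (+) q2.1, Node q1.2 q2.2)
         | q1 <- lie_terms p l, q2 <- lie_terms p r]
      ++ [seq (q1.1 (+) q2.1 (+) ~~ e, Node q2.2 q1.2)
         | q1 <- lie_terms p l, q2 <- lie_terms p r]
  end.

Definition iota_lie (K : fieldType) (p : bool) (t : tree) : FM K :=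
  \sum_(q <- lie_terms p t) (-1) ^+ q.1 *: << q.2 >>.

(* Image under iota_1 of the Lie bracket monomials of arity n (each of
   x_0, ..., x_{n-1} used exactly once); these span iota_1(Lie(n)). *)
Definition lie_mon (K : fieldType) (p : bool) (n : nat) (x : FM K) : Prop :=
  exists t : tree, perm_eq (leaves t) (iota 0 n) /\ x = iota_lie K p t.

Definition lnorm (i : nat) (s : seq nat) : tree :=
  foldl (fun a j => Node a (Leaf j)) (Leaf i) s.

(* The left-normed monomials of arity n; they span Vert(n). *)
Definition vert_mon (K : fieldType) (n : nat) (x : FM K) : Prop :=
  exists (i : nat) (s : seq nat),
    perm_eq (i :: s) (iota 0 n) /\ x = << lnorm i s >>.

(* x lies in Vert(n) modulo the pre-Lie ideal, i.e. the class of x in the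
   free (graded) pre-Lie algebra lies in Vert(n). *)
Definition in_vert_mod_prelie (K : fieldType) (p : bool) (n : nat) (x : FM K)
  : Prop :=
  inSpan K (fun y => vert_mon K n y \/ in_prelie_ideal_gen K p y) x.

(* Main.v *)
Require Import Defs.
From HB Require Import structures.
From mathcomp Require Import all_boot all_order all_algebra.
From mathcomp Require Import finmap monalg.

Import GRing.Theory.
Local Open Scope ring_scope.

Set Implicit Arguments.
Section Gen.
Variable K : fieldType.
Local Notation V := (FM K).

Lemma inSpan0 (P : V -> Prop) : inSpan K P 0.
Proof. by exists [::]; split => //; rewrite big_nil. Qed.

Lemma inSpanD (P : V -> Prop) x y : inSpan K P x -> inSpan K P y -> inSpan K P (x + y).
Proof.
move=> [l1 [H1 ->]] [l2 [H2 ->]]; exists (l1 ++ l2); split; last by rewrite big_cat.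
by move=> q; rewrite mem_cat => /orP [/H1|/H2].
Qed.

Lemma inSpanZ (P : V -> Prop) c x : inSpan K P x -> inSpan K P (c *: x).
Proof.
move=> [l [H ->]]; exists [seq (c * q.1, q.2) | q <- l]; split.
  by move=> q /mapP [q' /H Hq' ->].
by rewrite big_map scaler_sumr; apply: eq_bigr => q _; rewrite scalerA.
Qed.

Lemma inSpan1 (P : V -> Prop) x : P x -> inSpan K P x.
Proof.
move=> Px; exists [:: (1, x)]; split; first by move=> q; rewrite inE => /eqP ->.
by rewrite big_seq1 scale1r.
Qed.

Lemma inSpanN (P : V -> Prop) x : inSpan K P x -> inSpan K P (- x).
Proof. by move=> H; rewrite -scaleN1r; apply: inSpanZ. Qed.

Lemma inSpanB (P : V -> Prop) x y : inSpan K P x -> inSpan K P y -> inSpan K P (x - y).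
Proof. by move=> Hx Hy; apply: inSpanD => //; apply: inSpanN. Qed.

Lemma inSpan_sum (P : V -> Prop) (I : eqType) (r : seq I) (F : I -> V) :
  (forall i, i \in r -> inSpan K P (F i)) -> inSpan K P (\sum_(i <- r) F i).
Proof.
elim: r => [|i r IH] H; first by rewrite big_nil; apply: inSpan0.
rewrite big_cons; apply: inSpanD; first by apply: H; rewrite inE eqxx.
by apply: IH => j Hj; apply: H; rewrite inE Hj orbT.
Qed.

Lemma inSpan_mono (P Q : V -> Prop) y :
  (forall x, P x -> inSpan K Q x) -> inSpan K P y -> inSpan K Q y.
Proof.
move=> H [l [Hl ->]]; apply: inSpan_sum => q Hq; apply: inSpanZ; apply: H.
by apply: Hl.
Qed.

Definition islin (f : V -> V) := forall c x y, f (c *: x + y) = c *: f x + f y.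

Section Lin.
Variable f : V -> V.
Hypothesis hf : islin f.
Lemma lin0 : f 0 = 0.
Proof.
have := hf 1 0 0; rewrite scaler0 addr0 scale1r.
by move/(congr1 (fun z => z - f 0)); rewrite addrK subrr.
Qed.
Lemma linD x y : f (x + y) = f x + f y.
Proof. by have := hf 1 x y; rewrite !scale1r. Qed.
Lemma linZ c x : f (c *: x) = c *: f x.
Proof. by have := hf c x 0; rewrite !addr0 lin0 addr0. Qed.
Lemma linN x : f (- x) = - f x.
Proof. by rewrite -scaleN1r linZ scaleN1r. Qed.
Lemma linB x y : f (x - y) = f x - f y.
Proof. by rewrite linD linN. Qed.
Lemma lin_sum (I : Type) (r : seq I) (F : I -> V) :
  f (\sum_(i <- r) F i) = \sum_(i <- r) f (F i).
Proof.
elim: r => [|i r IH]; first by rewrite !big_nil lin0.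
by rewrite !big_cons linD IH.
Qed.
End Lin.

Lemma inSpan_lin (f : V -> V) (P Q : V -> Prop) y : islin f ->
  (forall u, P u -> inSpan K Q (f u)) -> inSpan K P y -> inSpan K Q (f y).
Proof.
move=> hf H [l [Hl ->]]; rewrite lin_sum //; apply: inSpan_sum => q Hq.
by rewrite linZ //; apply: inSpanZ; apply: H; apply: Hl.
Qed.

Lemma islin_comp f g : islin f -> islin g -> islin (fun x => f (g x)).
Proof. by move=> hf hg c x y; rewrite hg hf. Qed.

Lemma islin_sub f g : islin f -> islin g -> islin (fun x => f x - g x).
Proof.
move=> hf hg c x y; rewrite hf hg scalerBr opprD !addrA; congr (_ - _).
by rewrite addrAC.
Qed.

Lemma islin_scale e f : islin f -> islin (fun x => e *: f x).
Proof. by move=> hf c x y; rewrite hf scalerDr !scalerA mulrC. Qed.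

Lemma comb_eq (e : K) (x1 x2 y1 y2 : V) :
  (x1 - e *: x2) - (y1 - e *: y2) = (x1 - y1) - e *: (x2 - y2).
Proof.
rewrite scalerBr !opprB addrACA [RHS]addrACA; congr (_ + _); by rewrite addrC.
Qed.

Definition lin1 (f : tree -> V) (x : V) : V := \sum_(k <- msupp x) x@_k *: f k.

Lemma lin1_wide f x (d : {fset tree}) : (msupp x `<=` d)%fset ->
  lin1 f x = \sum_(k <- d) x@_k *: f k.
Proof.
move=> le; rewrite /lin1 (big_fset_incl _ le) // => k _ /mcoeff_outdom ->.
by rewrite scale0r.
Qed.

Lemma islin_lin1 f : islin (lin1 f).
Proof.
move=> c x y.
pose d := (msupp x `|` msupp y `|` msupp (c *: x + y))%fset.
have h1 : (msupp x `<=` d)%fset by rewrite /d -fsetUA fsubsetUl.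
have h2 : (msupp y `<=` d)%fset by rewrite /d fsetUAC fsubsetUr.
have h3 : (msupp (c *: x + y) `<=` d)%fset by rewrite /d fsubsetUr.
rewrite (lin1_wide _ _ _ h1) (lin1_wide _ _ _ h2) (lin1_wide _ _ _ h3) scaler_sumr -big_split.
by apply: eq_bigr => k _; rewrite mcoeffD mcoeffZ scalerDl scalerA.
Qed.

Lemma lin1U f k : lin1 f << k >> = f k.
Proof. by rewrite (lin1_wide _ _ _ msuppU_le) big_seq_fset1 mcoeffUU scale1r. Qed.

Lemma eq_lin1 f g x : f =1 g -> lin1 f x = lin1 g x.
Proof. by move=> h; apply: eq_bigr => k _; rewrite h. Qed.

Lemma lin1_fun c f g x :
  lin1 (fun k => c *: f k + g k) x = c *: lin1 f x + lin1 g x.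
Proof.
rewrite /lin1 scaler_sumr -big_split; apply: eq_bigr => k _.
by rewrite scalerDr !scalerA mulrC.
Qed.

Definition Nd (x y : V) : V := lin1 (fun k => lin1 (fun m => << Node k m >>) y) x.

Lemma islin_NdL y : islin (fun x => Nd x y).
Proof. exact: islin_lin1. Qed.

Lemma islin_NdR x : islin (Nd x).
Proof.
move=> c y1 y2; rewrite /Nd -lin1_fun; apply: eq_lin1 => k.
by rewrite islin_lin1.
Qed.

Lemma NdU a b : Nd << a >> << b >> = << Node a b >>.
Proof. by rewrite /Nd !lin1U. Qed.

Lemma monalgZ1 c (k : tree) : << c *g k >> = c *: (<< k >> : V).
Proof.
apply/malgP => k'; rewrite mcoeffZ !mcoeffU.
by case: (k == k'); rewrite ?mulr1 ?mulr0.
Qed.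

Definition mon (x : V) := exists k, x = << k >>.

Lemma mon_span x : inSpan K mon x.
Proof.
rewrite (monalgE x); apply: inSpan_sum => k _; rewrite monalgZ1.
by apply: inSpanZ; apply: inSpan1; exists k.
Qed.

End Gen.
Arguments Nd {K}.
Arguments lin1 {K}.
Arguments islin {K}.
Arguments mon {K}.

Section Main.
Variable K : fieldType.
Variable p : bool.
Local Notation V := (FM K).
Local Notation J := (inSpan K (in_prelie_ideal_gen K p)).
Local Notation il := (iota_lie K p).

Lemma J_Nd1 x w : J x -> J (Nd x << w >>).
Proof.
apply: (inSpan_lin (f := fun x => Nd x << w >>)); first exact: islin_NdL.
move=> u [C [a [b [c ->]]]]; apply: inSpan1; exists (CL C w), a, b, c.
by rewrite /prelie_rel !(linB (islin_NdL << w >>)) (linZ (islin_NdL << w >>)) (linB (islin_NdL << w >>)) !NdU.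
Qed.

Lemma J_Nd2 x w : J x -> J (Nd << w >> x).
Proof.
apply: (inSpan_lin (f := Nd << w >>)); first exact: islin_NdR.
move=> u [C [a [b [c ->]]]]; apply: inSpan1; exists (CR w C), a, b, c.
by rewrite /prelie_rel !(linB (islin_NdR << w >>)) (linZ (islin_NdR << w >>)) (linB (islin_NdR << w >>)) !NdU.
Qed.

Lemma J_NdL x y : J x -> J (Nd x y).
Proof.
move=> Jx; apply: (inSpan_lin (P := @mon K)); [exact: islin_NdR| |exact: mon_span].
by move=> u [w ->]; apply: J_Nd1.
Qed.

Lemma J_NdR x y : J x -> J (Nd y x).
Proof.
move=> Jx; apply: (inSpan_lin (f := fun y => Nd y x) (P := @mon K)); [exact: islin_NdL| |exact: mon_span].
by move=> u [w ->]; apply: J_Nd2.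
Qed.

Lemma Jtrans x y z : J (x - y) -> J (y - z) -> J (x - z).
Proof. by move=> h1 h2; have := inSpanD h1 h2; rewrite addrA subrK. Qed.

Lemma Jcomb e x1 x2 y1 y2 : J (x1 - y1) -> J (x2 - y2) ->
  J ((x1 - e *: x2) - (y1 - e *: y2)).
Proof. by move=> h1 h2; rewrite comb_eq; apply: inSpanB => //; apply: inSpanZ. Qed.


Lemma lie_terms_size t q : q \in lie_terms p t -> size (leaves q.2) = size (leaves t).
Proof.
elim: t q => [i|l IHl r IHr] q /=; first by rewrite inE => /eqP ->.
rewrite mem_cat => /orP [] /allpairsP [[q1 q2] [/= h1 h2 ->]] /=;
  rewrite !size_cat (IHl _ h1) (IHr _ h2) //.
by rewrite addnC.
Qed.

Definition Hom (P : bool) (y : V) :=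
  inSpan K (fun u => exists t, par p t = P /\ u = << t >>) y.

Lemma il_hom t : Hom (par p t) (il t).
Proof.
rewrite /iota_lie; apply: inSpan_sum => q hq; apply: inSpanZ; apply: inSpan1.
by exists q.2; split => //; rewrite /par (@lie_terms_size t q hq).
Qed.

Lemma il_leaf i : il (Leaf i) = << Leaf i >>.
Proof. by rewrite /iota_lie /= big_seq1 expr0 scale1r. Qed.

Lemma NdE (L1 L2 : seq (bool * tree)) :
  Nd (\sum_(q <- L1) (-1) ^+ q.1 *: << q.2 >>) (\sum_(q <- L2) (-1) ^+ q.1 *: << q.2 >>)
  = \sum_(q1 <- L1) \sum_(q2 <- L2) (-1) ^+ (q1.1 (+) q2.1) *: (<< Node q1.2 q2.2 >> : V).
Proof.
rewrite (lin_sum (islin_NdL _)); apply: eq_bigr => q1 _.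
rewrite (linZ (islin_NdL _)) (lin_sum (islin_NdR _)) scaler_sumr; apply: eq_bigr => q2 _.
by rewrite (linZ (islin_NdR _)) NdU scalerA signr_addb.
Qed.

Lemma il_node l r : il (Node l r) =
  Nd (il l) (il r) - (-1) ^+ (par p l && par p r) *: Nd (il r) (il l).
Proof.
rewrite /iota_lie /= big_cat /= !big_allpairs_dep /= !NdE; congr (_ + _).
rewrite exchange_big scaler_sumr -sumrN; apply: eq_bigr => q1 _.
rewrite scaler_sumr -sumrN; apply: eq_bigr => q2 _.
rewrite scalerA -scaleNr; congr (_ *: _).
by rewrite !signr_addb signrN mulrN mulrC [_ * (-1) ^+ q1.1]mulrC.
Qed.

Definition FF (a : tree) (e : K) (y z : V) :=
  (Nd << a >> (Nd y z) - e *: Nd << a >> (Nd z y))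
  - (Nd (Nd << a >> y) z - e *: Nd (Nd << a >> z) y).

Lemma FF_mon a b c : J (FF a ((-1) ^+ (par p b && par p c)) << b >> << c >>).
Proof.
rewrite /FF !NdU.
have -> : forall A B C D : V, forall e : K, (B - e *: D) - (A - e *: C) = - ((A - B) - e *: (C - D)).
  by move=> A B C D e; rewrite comb_eq opprD opprK opprB -scalerN opprB.
apply: inSpanN; apply: inSpan1; by exists Hole, a, b, c.
Qed.

Lemma islin_FF1 a e z : islin (fun y => FF a e y z).
Proof.
rewrite /FF; apply: islin_sub; apply: islin_sub; try apply: islin_scale.
- exact: (islin_comp (islin_NdR << a >>) (islin_NdL z)).
- exact: (islin_comp (islin_NdR << a >>) (islin_NdR z)).
- exact: (islin_comp (islin_NdL z) (islin_NdR << a >>)).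
- exact: (islin_NdR _).
Qed.

Lemma islin_FF2 a e y : islin (fun z => FF a e y z).
Proof.
rewrite /FF; apply: islin_sub; apply: islin_sub; try apply: islin_scale.
- exact: (islin_comp (islin_NdR << a >>) (islin_NdR y)).
- exact: (islin_comp (islin_NdR << a >>) (islin_NdL y)).
- exact: (islin_NdR _).
- exact: (islin_comp (islin_NdL y) (islin_NdR << a >>)).
Qed.

Lemma prelie_lin a P1 P2 y z : Hom P1 y -> Hom P2 z ->
  J (FF a ((-1) ^+ (P1 && P2)) y z).
Proof.
move=> hy hz.
have H1 : forall c, par p c = P2 -> J (FF a ((-1) ^+ (P1 && P2)) y << c >>).
  move=> c hc; apply: (inSpan_lin (f := fun y => FF a _ y << c >>)) hy.
    exact: islin_FF1.
  by move=> u [b [hb ->]]; rewrite -hb -hc; apply: FF_mon.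
apply: (inSpan_lin (f := fun z => FF a _ y z)) hz; first exact: islin_FF2.
by move=> u [c [hc ->]]; apply: H1.
Qed.

Definition lnormT (k : tree) (s : seq nat) : tree :=
  foldl (fun a j => Node a (Leaf j)) k s.

Definition Wsp (k : tree) (S : seq nat) (y : V) :=
  inSpan K (fun u => exists s, perm_eq s S /\ u = << lnormT k s >>) y.

Definition Vsp (S : seq nat) (y : V) :=
  inSpan K (fun u => exists i s, perm_eq (i :: s) S /\ u = << lnorm i s >>) y.

Lemma upgrade G Y : islin G -> (forall a, J (Nd << a >> Y - G << a >>)) ->
  forall v, J (Nd v Y - G v).
Proof.
move=> hG H v.
apply: (inSpan_lin (f := fun v => Nd v Y - G v) (P := mon)) (mon_span v).
  exact: (islin_sub (islin_NdL Y) hG).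
by move=> u [a ->]; apply: H.
Qed.

Lemma lemA t : exists G, [/\ islin G, forall k, Wsp k (leaves t) (G << k >>)
  & forall v, J (Nd v (il t) - G v)].
Proof.
elim: t => [i|l [Gl [hGl WGl JGl]] r [Gr [hGr WGr JGr]]].
  exists (fun v => Nd v << Leaf i >>); split.
  - exact: islin_NdL.
  - move=> k; rewrite NdU; apply: inSpan1; exists [:: i]; split => //.
  - by move=> v; rewrite il_leaf subrr; apply: inSpan0.
pose e : K := (-1) ^+ (par p l && par p r).
have hG : islin (fun v => Gr (Gl v) - e *: Gl (Gr v)).
  apply: islin_sub; first exact: islin_comp.
  by apply: islin_scale; apply: islin_comp.
exists (fun v => Gr (Gl v) - e *: Gl (Gr v)); split => //.
  move=> k; apply: inSpanB; last apply: inSpanZ.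
    apply: (inSpan_lin (f := Gr)) (WGl k) => // u [s [hs ->]].
    apply: inSpan_mono (WGr _) => x [s' [hs' ->]]; apply: inSpan1.
    exists (s ++ s'); split; first by rewrite /= perm_cat.
    by rewrite /lnormT foldl_cat.
  apply: (inSpan_lin (f := Gl)) (WGr k) => // u [s [hs ->]].
  apply: inSpan_mono (WGl _) => x [s' [hs' ->]]; apply: inSpan1.
  exists (s ++ s'); split; last by rewrite /lnormT foldl_cat.
  by rewrite /= (perm_trans (perm_cat hs hs')) // perm_catC.
apply: upgrade => // a.
rewrite il_node (linB (islin_NdR _)) (linZ (islin_NdR _)).
apply: (Jtrans (y := Nd (Nd << a >> (il l)) (il r) - e *: Nd (Nd << a >> (il r)) (il l))).
  exact: (prelie_lin a (il_hom l) (il_hom r)).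
apply: Jcomb.
  apply: (Jtrans (y := Nd (Gl << a >>) (il r))); last exact: JGr.
  by rewrite -(linB (islin_NdL _)); apply: J_NdL; apply: JGl.
apply: (Jtrans (y := Nd (Gr << a >>) (il l))); last exact: JGl.
by rewrite -(linB (islin_NdL _)); apply: J_NdL; apply: JGr.
Qed.

Lemma lemB t : exists v, Vsp (leaves t) v /\ J (il t - v).
Proof.
elim: t => [i|l [vl [Vl Jl]] r [vr [Vr Jr]]].
  exists << Leaf i >>; split.
    by apply: inSpan1; exists i, [::]; split.
  by rewrite il_leaf subrr; apply: inSpan0.
have [Gl [hGl WGl JGl]] := lemA l.
have [Gr [hGr WGr JGr]] := lemA r.
pose e : K := (-1) ^+ (par p l && par p r).
exists (Gr vl - e *: Gl vr); split.
  apply: inSpanB; last apply: inSpanZ.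
    apply: (inSpan_lin (f := Gr)) Vl => // u [i [s [hs ->]]].
    apply: inSpan_mono (WGr (lnormT (Leaf i) s)) => x [s' [hs' ->]]; apply: inSpan1.
    exists i, (s ++ s'); split; first by rewrite -cat_cons perm_cat.
    by rewrite /lnormT /lnorm foldl_cat.
  apply: (inSpan_lin (f := Gl)) Vr => // u [i [s [hs ->]]].
  apply: inSpan_mono (WGl (lnormT (Leaf i) s)) => x [s' [hs' ->]]; apply: inSpan1.
  exists i, (s ++ s'); split; last by rewrite /lnormT /lnorm foldl_cat.
  by rewrite -cat_cons (perm_trans (perm_cat hs hs')) // perm_catC.
rewrite il_node; apply: Jcomb.
  apply: (Jtrans (y := Nd vl (il r))); last exact: JGr.
  by rewrite -(linB (islin_NdL _)); apply: J_NdL.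
apply: (Jtrans (y := Nd vr (il l))); last exact: JGl.
by rewrite -(linB (islin_NdL _)); apply: J_NdL.
Qed.

End Main.

Unset Implicit Arguments.

Theorem lemma5p5 (K : fieldType) (n : nat) (hn : (1 <= n)%N) (p : bool)
  (x : FM K) :
  inSpan K (lie_mon K p n) x -> in_vert_mod_prelie K p n x.
Proof.
move=> H; apply: inSpan_mono H => y [t [ht ->]].
have [v [Vv Jv]] := lemB K p t.
rewrite -(subrK v (iota_lie K p t)); apply: inSpanD.
  by apply: inSpan_mono Jv => u hu; apply: inSpan1; right.
apply: inSpan_mono Vv => u [i [s [hs ->]]]; apply: inSpan1; left.
by exists i, s; split => //; apply: perm_trans hs ht.
Qed.
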